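(* Let $G$ and $H$ be connected graphs, each of order at least $2$. Then $dim_s(G\square H)=2$ if and only if both $G$ and $H$ are paths.
   Context: Graphs are finite, simple, undirected; for connected $G$, $d_G$ is the shortest-path distance and $I_G[u,v]$ is the set of vertices lying on some shortest $u$–$v$ path. A vertex $w$ strongly resolves vertices $u,v$ if $v\in I_G[u,w]$ or $u\in I_G[v,w]$. A strong resolving set of $G$ is a set $S\subseteq V(G)$ such that every pair of vertices is strongly resolved by some vertex of $S$; $dim_s(G)$ is the minimum cardinality of such a set. $G\square H$ denotes the Cartesian product: vertex set $V(G)\times V(H)$, $(a,b)\sim(c,d)$ iff ($a=c$ and $bd\in E(H)$) or ($b=d$ and $ac\in E(G)$). *)

(* Defs.v *)
From mathcomp Require Import all_boot.
Set Implicit Arguments. Unset Strict Implicit. Unset Printing Implicit Defensive.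

Section Graphs.
Variable T : finType.
Implicit Types (e : rel T) (u v w x : T).

Definition simple_graph e := symmetric e /\ irreflexive e.
Definition connected_graph e := forall u v, connect e u v.

Definition walkb e n u v : bool :=
  [exists s : n.-tuple T, path e u s && (last u s == v)].

(* shortest-path distance: least n with an n-edge walk (n < #|T| when connected) *)
Definition dist e u v : nat := find (fun n => walkb e n u v) (iota 0 #|T|).

Definition interval e u v x : bool :=
  [exists s : (dist e u v).-tuple T,
     [&& path e u s, last u s == v & x \in u :: s]].

Definition strongly_resolves e w u v : bool :=
  interval e u w v || interval e v w u.

Definition strong_resolving_set e (S : {set T}) : bool :=
  [forall u, forall v, (u != v) ==> [exists w in S, strongly_resolves e w u v]].

Definition sdim e : nat :=
  \big[minn/#|T|]_(S : {set T} | strong_resolving_set e S) #|S|.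

Definition is_path_graph e : Prop :=
  exists f : 'I_#|T| -> T, bijective f /\
    forall i j : 'I_#|T|, e (f i) (f j) = ((i.+1 == j) || (j.+1 == i)).
End Graphs.

Definition boxrel (T1 T2 : finType) (e1 : rel T1) (e2 : rel T2) : rel (T1 * T2) :=
  fun x y => ((x.1 == y.1) && e2 x.2 y.2) || ((x.2 == y.2) && e1 x.1 y.1).

(* Main.v *)
Require Import Defs.
From mathcomp Require Import all_boot zify.
Set Implicit Arguments. Unset Strict Implicit. Unset Printing Implicit Defensive.

Section Dist.
Variable T : finType.
Variable e : rel T.
Hypothesis esym : symmetric e.
Hypothesis eirr : irreflexive e.
Hypothesis econn : connected_graph e.

Lemma walkbP n u v :
  reflect (exists s : seq T, [/\ size s = n, path e u s & last u s = v]) (walkb e n u v).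
Proof.
apply: (iffP existsP) => [[s /andP[Hp /eqP Hl]]|[s [Hs Hp Hl]]].
  by exists s; rewrite size_tuple.
have Hs' : size s == n by rewrite Hs.
by exists (Tuple Hs'); rewrite /= Hp Hl eqxx.
Qed.

Lemma walk_cat n1 n2 u v w :
  walkb e n1 u v -> walkb e n2 v w -> walkb e (n1 + n2) u w.
Proof.
move=> /walkbP[s1 [<- p1 l1]] /walkbP[s2 [<- p2 l2]]; apply/walkbP.
by exists (s1 ++ s2); rewrite size_cat cat_path last_cat l1 p1 p2 l2.
Qed.

Lemma walk_exists u v : exists2 n, n < #|T| & walkb e n u v.
Proof.
have /connectP[p Hp Hl] := econn u v.
case: (shortenP Hp) Hl => p' Hp' Hu _ Hl.
exists (size p'); last by apply/walkbP; exists p'.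
have := max_card (mem (u :: p')).
by rewrite (card_uniqP Hu).
Qed.

Lemma has_walk u v : has (fun n => walkb e n u v) (iota 0 #|T|).
Proof.
have [n Hn Hw] := walk_exists u v.
by apply/hasP; exists n; rewrite ?mem_iota.
Qed.

Lemma dist_lt u v : dist e u v < #|T|.
Proof. by have := has_walk u v; rewrite has_find size_iota. Qed.

Lemma dist_walk u v : walkb e (dist e u v) u v.
Proof.
have := nth_find 0 (has_walk u v).
by rewrite nth_iota ?dist_lt.
Qed.

Lemma dist_min n u v : walkb e n u v -> dist e u v <= n.
Proof.
move=> Hw; rewrite leqNgt; apply/negP => Hlt.
have Hn : n < #|T| by apply: ltn_trans Hlt (dist_lt u v).
by have := before_find 0 Hlt; rewrite nth_iota // Hw.
Qed.

Lemma dist_tri u v w : dist e u w <= dist e u v + dist e v w.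
Proof. by apply: dist_min; apply: walk_cat; apply: dist_walk. Qed.

Lemma dist_refl u : dist e u u = 0.
Proof.
apply/eqP; rewrite -leqn0; apply: dist_min; apply/walkbP; by exists [::].
Qed.

Lemma dist_eq0 u v : dist e u v = 0 -> u = v.
Proof.
move=> H; have /walkbP[s [Hs _ Hl]] := dist_walk u v.
by move: Hs Hl; rewrite H; case: s.
Qed.

Lemma dist_edge u v : e u v -> dist e u v <= 1.
Proof. move=> H; apply: dist_min; apply/walkbP; exists [:: v]; by rewrite /= H. Qed.

Lemma potential (phi : T -> nat) :
  (forall x y, e x y -> phi x <= (phi y).+1) ->
  forall u v, phi u <= dist e u v + phi v.
Proof.
move=> Hphi u v; have /walkbP[s [<- Hp <-]] := dist_walk u v.
elim: s u Hp => [|y s IH] u //= /andP[Huy Hp].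
have := Hphi _ _ Huy; have := IH _ Hp; lia.
Qed.

Lemma dist_sym u v : dist e u v = dist e v u.
Proof.
suff H : forall u v, dist e v u <= dist e u v.
  by apply/eqP; rewrite eqn_leq !H.
move=> x y.
have := @potential (fun z => dist e y z) _ x y.
rewrite dist_refl addn0; apply => a b Hab.
have := dist_tri y b a; have : e b a by rewrite esym.
move/dist_edge.
lia.
Qed.

Lemma dist_pos u v : u != v -> 0 < dist e u v.
Proof. move=> H; rewrite lt0n; apply/eqP => /dist_eq0 /eqP; by rewrite (negbTE H). Qed.

Lemma first_step n u v : dist e u v = n.+1 -> exists2 z, e u z & dist e z v = n.
Proof.
move=> Hd; have /walkbP[s [Hs Hp Hl]] := dist_walk u v.
rewrite Hd in Hs; case: s Hs Hp Hl => [|z s] //= [Hs] /andP[Huz Hp] Hl.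
exists z => //; apply/eqP; rewrite eqn_leq; apply/andP; split.
  by rewrite -Hs; apply: dist_min; apply/walkbP; exists s.
have := dist_tri u z v; have := dist_edge Huz; lia.
Qed.

Lemma interval_iff u w x :
  interval e u w x <-> dist e u w = dist e u x + dist e x w.
Proof.
split.
  case/existsP => s /and3P[Hp /eqP Hl Hx].
  have Hs0 := size_tuple s.
  case: (splitPl Hx) Hp Hl Hs0 => p1 p2 Hl1.
  rewrite cat_path last_cat Hl1 size_cat => /andP[Hp1 Hp2] Hl2 Hs.
  have H1 : dist e u x <= size p1 by apply: dist_min; apply/walkbP; exists p1.
  have H2 : dist e x w <= size p2 by apply: dist_min; apply/walkbP; exists p2.
  have {}Hs : size p1 + size p2 = dist e u w := Hs.
  have := dist_tri u x w; lia.
move=> H.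
have /walkbP[s1 [Hs1 Hp1 Hl1]] := dist_walk u x.
have /walkbP[s2 [Hs2 Hp2 Hl2]] := dist_walk x w.
have Hs : size (s1 ++ s2) == dist e u w by rewrite size_cat Hs1 Hs2 H.
apply/existsP; exists (Tuple Hs); rewrite /= cat_path last_cat Hl1 Hp1 Hp2 Hl2 eqxx /=.
by rewrite -cat_cons mem_cat -{1}Hl1 mem_last.
Qed.

Lemma path_of_inj p : injective (fun x => dist e x p) -> is_path_graph e.
Proof.
move=> Hinj.
pose gi (x : T) : 'I_#|T| := Ordinal (dist_lt x p).
have gi_inj : injective gi by move=> x y /(congr1 val) /= /Hinj.
have gi_bij : bijective gi by apply: inj_card_bij gi_inj _; rewrite card_ord.
case: gi_bij => f c1 c2.
have Hf : forall i : 'I_#|T|, dist e (f i) p = i.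
  by move=> i; have := c2 i => /(congr1 val).
exists f; split; first by exists gi.
have key : forall i j : 'I_#|T|, i.+1 = j -> e (f i) (f j).
  move=> i j Hij; have := Hf j; rewrite -Hij => /first_step[z Hz Hd].
  have -> : f i = z by apply: Hinj; rewrite /= Hd Hf.
  by rewrite esym.
move=> i j; apply/idP/idP.
  move=> Hij.
  have Hne : f i != f j by apply/eqP => E; move: Hij; rewrite E eirr.
  have Hne' : (i : nat) != j.
    by apply: contra Hne => /eqP E; apply/eqP; congr f; apply: val_inj.
  have := dist_tri (f i) (f j) p; have := dist_tri (f j) (f i) p.
  have := dist_edge Hij; rewrite dist_sym => Hd.
  rewrite !Hf => h1 h2; apply/orP.
  case: (ltngtP i j) => H'; [left; apply/eqP; lia | right; apply/eqP; lia |].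
  by rewrite H' eqxx in Hne'.
case/orP => /eqP H; first exact: key.
by rewrite esym; apply: key.
Qed.
End Dist.

Section Prod.
Variables (T1 T2 : finType) (e1 : rel T1) (e2 : rel T2).
Hypotheses (s1 : symmetric e1) (i1 : irreflexive e1) (c1 : connected_graph e1).
Hypotheses (s2 : symmetric e2) (i2 : irreflexive e2) (c2 : connected_graph e2).
Local Notation box := (boxrel e1 e2).

Lemma box_sym : symmetric box.
Proof.
move=> [a b] [c d]; rewrite /boxrel /= s1 s2 (eq_sym a) (eq_sym b) //.
Qed.

Lemma box_irr : irreflexive box.
Proof. by move=> [a b]; rewrite /boxrel /= i1 i2 !andbF. Qed.

Lemma liftl b s a : path e1 a s ->
  path box (a, b) [seq (x, b) | x <- s] && (last (a, b) [seq (x, b) | x <- s] == (last a s, b)).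
Proof.
elim: s a => [|x s IH] a /=; first by rewrite eqxx.
case/andP => Hax /IH/andP[-> ->]; by rewrite /boxrel /= eqxx Hax orbT.
Qed.

Lemma liftr a s b : path e2 b s ->
  path box (a, b) [seq (a, x) | x <- s] && (last (a, b) [seq (a, x) | x <- s] == (a, last b s)).
Proof.
elim: s b => [|x s IH] b /=; first by rewrite eqxx.
case/andP => Hax /IH/andP[-> ->]; by rewrite /boxrel /= eqxx Hax.
Qed.

Lemma box_conn : connected_graph box.
Proof.
move=> [a b] [c d]; apply: (@connect_trans _ _ (c, b)).
  have /connectP[s Hs ->] := c1 a c.
  by case/andP: (liftl b Hs) => Hp /eqP Hl; apply/connectP; exists [seq (x, b) | x <- s].
have /connectP[s Hs ->] := c2 b d.
by case/andP: (liftr c Hs) => Hp /eqP Hl; apply/connectP; exists [seq (c, x) | x <- s].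
Qed.

Lemma dist_box a b c d : dist box (a, b) (c, d) = dist e1 a c + dist e2 b d.
Proof.
apply/eqP; rewrite eqn_leq; apply/andP; split.
  apply: leq_trans (dist_tri box_conn _ (c, b) _) _.
  apply: leq_add.
    have /walkbP[s [Hs Hp Hl]] := dist_walk c1 a c.
    apply: dist_min box_conn _ _ _ _; apply/walkbP; exists [seq (x, b) | x <- s].
    by case/andP: (liftl b Hp) => -> /eqP ->; rewrite size_map Hs Hl.
  have /walkbP[s [Hs Hp Hl]] := dist_walk c2 b d.
  apply: dist_min box_conn _ _ _ _; apply/walkbP; exists [seq (c, x) | x <- s].
  by case/andP: (liftr c Hp) => -> /eqP ->; rewrite size_map Hs Hl.
have := @potential _ box box_conn (fun x => dist e1 x.1 c + dist e2 x.2 d) _ (a, b) (c, d).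
rewrite /= (dist_refl c1) (dist_refl c2) !addn0 => H; apply: H.
move=> [x y] [x' y']; rewrite /boxrel /= => /orP[] /andP[/eqP <- He].
  have := dist_tri c2 y y' d; have := dist_edge c2 He; lia.
have := dist_tri c1 x x' c; have := dist_edge c1 He; lia.
Qed.

End Prod.

Lemma bigmin_le (I : eqType) (r : seq I) (P : pred I) (F : I -> nat) N i0 :
  i0 \in r -> P i0 -> \big[minn/N]_(i <- r | P i) F i <= F i0.
Proof.
elim: r => //= x r IH; rewrite in_cons big_cons => /orP[/eqP <- -> | Hin HP].
  exact: geq_minl.
case: (P x); last exact: IH.
by apply: leq_trans (geq_minr _ _) _; exact: IH.
Qed.

Lemma sdim_le (T : finType) (e : rel T) S : strong_resolving_set e S -> sdim e <= #|S|.
Proof. by move=> HS; rewrite /sdim; apply: bigmin_le => //; exact: mem_index_enum. Qed.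

Lemma sdim_ex (T : finType) (e : rel T) :
  sdim e = #|T| \/ exists2 S, strong_resolving_set e S & #|S| = sdim e.
Proof.
rewrite /sdim; apply: (big_ind (fun x => x = #|T| \/ exists2 S, strong_resolving_set e S & #|S| = x)).
- by left.
- move=> x y Hx Hy /=; by case: (leqP x y).
- by move=> S HS; right; exists S.
Qed.

Lemma sdim_ge (T : finType) (e : rel T) k :
  k <= #|T| -> (forall S, strong_resolving_set e S -> k <= #|S|) -> k <= sdim e.
Proof.
move=> HT HS; rewrite /sdim; apply: (big_ind (fun x => k <= x)) => //.
by move=> x y hx hy; rewrite leq_min hx hy.
Qed.

Definition Res (A B : Type) (G : A -> A -> nat) (H : B -> B -> nat) p q a b c d :=
  (G a p + H b q = G a c + H b d + (G c p + H d q)) \/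
  (G c p + H d q = G c a + H d b + (G a p + H b q)).

Lemma core (A B : Type) (G : A -> A -> nat) (H : B -> B -> nat) (p1 p2 : A) (q1 q2 : B) (d : B) :
  (forall x y, G x y = G y x) -> (forall x y, H x y = H y x) ->
  (forall x y z, H x z <= H x y + H y z) ->
  (forall x y, x <> y -> 0 < G x y) -> 0 < H d q2 -> H q2 q2 = 0 ->
  (forall a b c d, a <> c -> Res G H p1 q1 a b c d \/ Res G H p2 q2 a b c d) ->
  forall a c, a <> c -> G a p1 <> G c p1.
Proof.
move=> Gs Hs Ht Gp Hd Hq hyp a c Hac Heq.
have R1 := hyp a q2 c d Hac.
have R2 := hyp c q2 a d (fun E => Hac (esym E)).
have F1 := Ht q2 d q1. have F2 := Ht d q2 q1.
have F3 := Gp _ _ Hac. have F4 := Gs a c. have F5 := Hs d q2.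
rewrite /Res in R1 R2.
case: R1 => [[?|?]|[?|?]]; case: R2 => [[?|?]|[?|?]]; lia.
Qed.

Lemma path_dist (T : finType) (e : rel T) (f : 'I_#|T| -> T) :
  symmetric e -> connected_graph e -> bijective f ->
  (forall i j : 'I_#|T|, e (f i) (f j) = ((i.+1 == j) || (j.+1 == i))) ->
  forall i j : 'I_#|T|, dist e (f i) (f j) = (i - j) + (j - i).
Proof.
move=> es ec [g fg gf] Hf.
have up : forall k (i j : 'I_#|T|), j - i = k -> i <= j -> dist e (f i) (f j) <= k.
  elim=> [|k IH] i j Hk Hij.
    have -> : i = j by apply: val_inj; apply/eqP; rewrite eqn_leq Hij /= -subn_eq0 Hk.
    by rewrite (dist_refl ec).
  have Hi : i.+1 < #|T| by apply: leq_trans (ltn_ord j); lia.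
  pose i' : 'I_#|T| := Ordinal Hi.
  apply: leq_trans (dist_tri ec _ (f i') _) _.
  rewrite -add1n; apply: leq_add.
    by apply: dist_edge ec _ _ _; rewrite Hf eqxx.
  by apply: IH; rewrite /= ?subnS ?Hk // -subn_gt0 Hk.
move=> i j; apply/eqP; rewrite eqn_leq; apply/andP; split.
  case: (leqP i j) => h.
    by apply: up => //; lia.
  by rewrite (dist_sym es ec); apply: up; [lia | apply: ltnW].
have := @potential _ e ec (fun x => (g x - j) + (j - g x)) _ (f i) (f j).
rewrite /= !fg subnn !addn0 => H; apply: H.
move=> x y; rewrite -{1}(gf x) -{1}(gf y) Hf; move: (nat_of_ord (g x)) (nat_of_ord (g y)) (nat_of_ord j) => a b c /orP[] /eqP; lia.
Qed.

Lemma other (T : finType) (x : T) : 1 < #|T| -> exists y, y != x.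
Proof.
case/card_gt1P => a [b [_ _ Hab]].
case: (eqVneq a x) => [Ea|]; last by exists a.
by exists b; rewrite -Ea eq_sym.
Qed.

Lemma nbr (T : finType) (e : rel T) : connected_graph e -> 1 < #|T| ->
  forall a, exists z, e a z.
Proof.
move=> ec hT a; have [a' Ha'] := other a hT.
rewrite eq_sym in Ha'.
have := dist_pos ec Ha'.
case Hd: (dist e a a') => [|n] // _.
by have [z Hz _] := first_step ec Hd; exists z.
Qed.

Lemma srsP (T : finType) (e : rel T) S u v : strong_resolving_set e S -> u != v ->
  exists2 w, w \in S & strongly_resolves e w u v.
Proof.
move/forallP/(_ u)/forallP/(_ v)/implyP => H /H /existsP[w /andP[Hw Hr]].
by exists w.
Qed.

Lemma pathG (T : finType) (e : rel T) :
  symmetric e -> connected_graph e -> is_path_graph e ->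
  exists g : T -> 'I_#|T|, [/\ forall a b, dist e a b = (g a - g b) + (g b - g a),
     injective g & forall i : 'I_#|T|, exists a, g a = i].
Proof.
move=> es ec [f [[g fg gf] Hf]].
exists g; split.
- move=> a b; rewrite -{1}(gf a) -{1}(gf b) (path_dist es ec) //; by exists g.
- exact: can_inj gf.
- by move=> i; exists (f i).
Qed.

Theorem proposition29 (T1 T2 : finType) (e1 : rel T1) (e2 : rel T2) :
  simple_graph e1 -> simple_graph e2 ->
  connected_graph e1 -> connected_graph e2 ->
  1 < #|T1| -> 1 < #|T2| ->
  (sdim (boxrel e1 e2) = 2 <-> is_path_graph e1 /\ is_path_graph e2).
Proof.
move=> [s1 i1] [s2 i2] c1 c2 n1 n2.
have bc := box_conn c1 c2.
have Resv : forall p q a b c d, strongly_resolves (boxrel e1 e2) (p, q) (a, b) (c, d) <->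
    Res (dist e1) (dist e2) p q a b c d.
  move=> p q a b c d; rewrite /strongly_resolves /Res.

  split.
    case/orP => /(interval_iff bc); rewrite !(dist_box c1 c2); [left|right] => //.
  case=> H; apply/orP; [left|right]; apply/(interval_iff bc); rewrite !(dist_box c1 c2) //.
have cardT : 2 <= #|{: T1 * T2}|.
  rewrite card_prod; apply: leq_trans n1 _; apply: leq_pmulr; lia.
have ge2 : 2 <= sdim (boxrel e1 e2).
  apply: sdim_ge => // S HS; rewrite ltnNge; apply/negP => HS1.
  have /card_gt1P[x1 [y1 [_ _ Hxy]]] := n1.
  have /card_gt1P[x2 _] := n2.
  case: (posnP #|S|) => [/cards0_eq S0|Hpos].
    have Hne0 : (x1, x2) != (y1, x2) by rewrite xpair_eqE negb_and Hxy.
    have [w] := srsP HS Hne0.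
    by rewrite S0 inE.
  have /cards1P[[a b] Sw] : #|S| == 1 by rewrite eqn_leq HS1.
  have [a' Ha'] := nbr c1 n1 a.
  have [b' Hb'] := nbr c2 n2 b.
  have Hne : (a', b) != (a, b').
    rewrite xpair_eqE negb_and; apply/orP; left; apply/eqP => E.
    by move: Ha'; rewrite E i1.
  have [w] := srsP HS Hne.
  rewrite Sw inE => /eqP -> /Resv; rewrite /Res.
  have h1 := dist_pos c1 (u := a) (v := a'); have h2 := dist_pos c2 (u := b) (v := b').
  have h3 : a != a' by apply/eqP => E; move: Ha'; rewrite E i1.
  have h4 : b != b' by apply/eqP => E; move: Hb'; rewrite E i2.
  have := h1 h3; have := h2 h4.
  rewrite (dist_sym s1 c1 a' a) (dist_sym s2 c2 b' b) !(dist_refl c1) !(dist_refl c2).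
  lia.
split.
  move=> Hsd.
  have [Hall|[S HS HcS]] := sdim_ex (boxrel e1 e2).
    have : 4 <= #|{: T1 * T2}| by rewrite card_prod; apply: leq_mul n1 n2.
    by rewrite -Hall Hsd.
  have /cards2P[[p1 q1] [[p2 q2] [Hw12 SE]]] : #|S| == 2 by rewrite HcS Hsd.
  have hyp : forall a b c d, (a, b) != (c, d) ->
      Res (dist e1) (dist e2) p1 q1 a b c d \/ Res (dist e1) (dist e2) p2 q2 a b c d.
    move=> a b c d Hne; have [w] := srsP HS Hne.
    rewrite SE !inE => /orP[] /eqP -> /Resv; by [left|right].
  split.
    have [d Hd] := other q2 n2.
    apply: (path_of_inj s1 i1 c1 (p := p1)) => a c Heq.
    case: (eqVneq a c) => // Hac; exfalso.
    apply: (core (G := dist e1) (H := dist e2) (p2 := p2) (q1 := q1) (q2 := q2) (d := d)) Heq.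
    - exact: dist_sym s1 c1.
    - exact: dist_sym s2 c2.
    - exact: dist_tri c2.
    - by move=> x y H; apply: (dist_pos c1); apply/eqP.
    - exact: (dist_pos c2 Hd).
    - exact: (dist_refl c2).
    - move=> a0 b0 c0 d0 H0; apply: hyp; rewrite xpair_eqE negb_and; apply/orP; left.
      exact/eqP.
    - exact/eqP.
  have [d Hd] := other p2 n1.
  apply: (path_of_inj s2 i2 c2 (p := q1)) => a c Heq.
  case: (eqVneq a c) => // Hac; exfalso.
  apply: (core (G := dist e2) (H := dist e1) (p2 := q2) (q1 := p1) (q2 := p2) (d := d)) Heq.
  - exact: dist_sym s2 c2.
  - exact: dist_sym s1 c1.
  - exact: dist_tri c1.
  - by move=> x y H; apply: (dist_pos c2); apply/eqP.
  - exact: (dist_pos c1 Hd).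
  - exact: (dist_refl c1).
  - move=> b0 a0 d0 c0 H0.
    have : (a0, b0) != (c0, d0).
      by rewrite xpair_eqE negb_and; apply/orP; right; apply/eqP.
    move/hyp; rewrite /Res; lia.
  - exact/eqP.
move=> [P1 P2].
have [g1 [G1 ig1 sg1]] := pathG s1 c1 P1.
have [g2 [G2 ig2 sg2]] := pathG s2 c2 P2.
have h01 : 0 < #|T1| by lia.
have h02 : 0 < #|T2| by lia.
have hm1 : #|T1|.-1 < #|T1| by lia.
have [a0 Ha0] := sg1 (Ordinal h01).
have [am Ham] := sg1 (Ordinal hm1).
have [b0 Hb0] := sg2 (Ordinal h02).
apply/eqP; rewrite eqn_leq ge2 andbT.
apply: (@leq_trans #|[set (a0, b0); (am, b0)]|); last by rewrite cards2; case: (_ != _).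
apply: sdim_le; apply/forallP => [[x y]]; apply/forallP => [[x' y']]; apply/implyP => Hne.
suff : Res (dist e1) (dist e2) a0 b0 x y x' y' \/ Res (dist e1) (dist e2) am b0 x y x' y'.
  case=> /Resv H; apply/existsP; [exists (a0, b0) | exists (am, b0)];
    by rewrite H !inE eqxx ?orbT.
rewrite /Res !G1 !G2 Ha0 Ham Hb0 /= !sub0n !subn0 !addn0.
have := ltn_ord (g1 x); have := ltn_ord (g1 x').
move: (nat_of_ord (g1 x)) (nat_of_ord (g1 x')) (nat_of_ord (g2 y)) (nat_of_ord (g2 y')) => i i' j j'.
move=> hi' hi.
have /andP[hi2 hi2'] : (i <= #|T1|.-1) && (i' <= #|T1|.-1).
  by rewrite -[i <= _]ltnS -[i' <= _]ltnS prednK // hi hi'.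
move: hi2 hi2'; move: (#|T1|.-1) => M hi2 hi2'; clear hi hi'.
case: (leqP i' i) => h1; case: (leqP j' j) => h2;
  [left; left | right; right | right; left | left; right]; lia.
Qed.
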